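(* Let $P=P_0\cup P_m$ be a finite poset with $P_0\cap P_m=\emptyset$, where $P_m=\{x_1,\dots,x_m\}$, and put $P_i=\{x_1,\dots,x_i\}$ for $i=1,\dots,m$ (and regard $P_0\cup P_i$ as induced subposets of $P$). Then $$\mathcal{F}(P)\cong(\cdots((\mathcal{F}(P_0)\boxplus\mathcal{F}((P_0\cup P_1)*x_1))\boxplus\mathcal{F}((P_0\cup P_2)*x_2))\boxplus\cdots\boxplus\mathcal{F}((P_0\cup P_{m-1})*x_{m-1}))\boxplus\mathcal{F}((P_0\cup P_m)*x_m),$$ that is, there are lattices $L_0=\mathcal{F}(P_0),L_1,\dots,L_m$ with $L_m\cong\mathcal{F}(P)$ such that for each $i$, $L_i=L_{i-1}\boxplus K_i$ for some cutting $K_i$ of $L_{i-1}$ with $K_i\cong\mathcal{F}((P_0\cup P_i)*x_i)$.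
   Context: For a finite poset $P$, $\mathcal{F}(P)$ is the set of filters (up-sets) of $P$ ordered by reverse inclusion; it is a finite distributive lattice with least element $P$ and greatest element $\emptyset$, and $\mathcal{F}(\emptyset)$ is the one-element lattice. A cutting of a finite distributive lattice $L$ is an interval $K=[\hat0_K,\hat1_K]$ of $L$ such that every maximal chain of $L$ meets $K$. Every finite distributive lattice is isomorphic to some $\mathcal{F}(Q)$. For a cutting $K$ of $L=\mathcal{F}(Q)$, let $S=\hat0_K\setminus\hat1_K$, $S_0$ the set of maximal elements of $Q\setminus\hat0_K$, $S_1$ the set of minimal elements of $\hat1_K$. The poset $Q_K$ is $Q\cup\{x_K\}$ ($x_K$ new) where the order on $Q$ is unchanged, $z<x_K$ iff $z\le s$ for some $s\in S_0$, $x_K<y$ iff $y\ge s$ for some $s\in S_1$, and $x_K$ is incomparable to every element of $S$. The convex expansion is $L\boxplus K:=\mathcal{F}(Q_K)$. For a poset $Q$ and element $x$, $Q*x$ is the induced subposet of elements of $Q$ incomparable to $x$. *)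

(* Defs.v *)
From mathcomp Require Import all_boot.
Set Implicit Arguments. Unset Strict Implicit. Unset Printing Implicit Defensive.

(* A finite "poset presentation": an ambient finite type, a domain (the
   elements of the poset, allowing induced subposets) and the order relation
   (only its restriction to the domain matters). *)
Record fposet := FPoset { car : finType; dom : {set car}; ord : rel car }.

(* F(Q): the filters (up-sets) of Q.  F(Q) is ordered by REVERSE inclusion:
   X <= Y in F(Q) iff Y \subset X. *)
Definition filters (Q : fposet) : {set {set car Q}} :=
  [set A : {set car Q} | (A \subset dom Q) &&
     [forall x in dom Q, forall y in dom Q,
        (x \in A) && @ord Q x y ==> (y \in A)]].

Definition is_chain (Q : fposet) (C : {set {set car Q}}) : Prop :=
  C \subset filters Q /\
  forall X Y, X \in C -> Y \in C -> X \subset Y \/ Y \subset X.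

Definition maximal_chain (Q : fposet) (C : {set {set car Q}}) : Prop :=
  @is_chain Q C /\ forall C', @is_chain Q C' -> C \subset C' -> C' = C.

(* the interval [a, b] of F(Q) (bottom a, top b; a <= b means b \subset a) *)
Definition interval (Q : fposet) (a b : {set car Q}) : {set {set car Q}} :=
  [set X in filters Q | (b \subset X) && (X \subset a)].

Definition is_cutting (Q : fposet) (a b : {set car Q}) : Prop :=
  [/\ a \in filters Q, b \in filters Q, b \subset a &
   forall C, @maximal_chain Q C -> exists2 X, X \in C & X \in @interval Q a b].

Definition S0 (Q : fposet) (a : {set car Q}) : {set car Q} :=
  [set s in dom Q :\: a | [forall t in dom Q :\: a, @ord Q s t ==> (t == s)]].
Definition S1 (Q : fposet) (b : {set car Q}) : {set car Q} :=
  [set s in b | [forall t in b, @ord Q t s ==> (t == s)]].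

(* order of Q_K, new element x_K = None *)
Definition expand_rel (Q : fposet) (a b : {set car Q}) :
  rel (option (car Q)) := fun u v =>
  match u, v with
  | Some z, Some y => @ord Q z y
  | Some z, None => [exists s in @S0 Q a, @ord Q z s]
  | None, Some y => [exists s in @S1 Q b, @ord Q s y]
  | None, None => true
  end.

(* Q_K, so that F(Q) \boxplus [a,b] = filters (@expand Q a b) *)
Definition expand (Q : fposet) (a b : {set car Q}) : fposet :=
  @FPoset (option (car Q)) (None |: (Some @: dom Q)) (expand_rel a b).

Definition iso_lat (T U : finType) (A : {set {set T}}) (B : {set {set U}})
  : Prop :=
  exists f : {set T} -> {set U},
    [/\ forall X, X \in A -> f X \in B,
        forall Y, Y \in B -> exists2 X, X \in A & f X = Y &
        forall X Y, X \in A -> Y \in A -> (f Y \subset f X) <-> (Y \subset X)].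

(* expansion_chain Q [R_1;..;R_m] P : starting from L_0 = F(Q), there are
   cuttings K_i of L_{i-1} with K_i ~ F(R_i), L_i = L_{i-1} \boxplus K_i,
   and L_m ~ F(P). *)
Fixpoint expansion_chain (Q : fposet) (Rs : seq fposet) (P : fposet) : Prop :=
  match Rs with
  | [::] => iso_lat (filters Q) (filters P)
  | R :: Rs' => exists a b : {set car Q},
      [/\ @is_cutting Q a b, iso_lat (@interval Q a b) (filters R) &
          expansion_chain (@expand Q a b) Rs' P]
  end.

Definition incomparable (T : finType) (le : rel T) (x t : T) : bool :=
  ~~ le t x && ~~ le x t.

(* Main.v *)
Require Import Defs.
From mathcomp Require Import all_boot.
Set Implicit Arguments. Unset Strict Implicit. Unset Printing Implicit Defensive.

Lemma filtersP (Q : fposet) (X : {set car Q}) :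
  reflect (X \subset dom Q /\ forall u v, u \in dom Q -> v \in dom Q ->
             u \in X -> @ord Q u v -> v \in X) (X \in filters Q).
Proof.
rewrite inE; apply: (iffP andP) => [[H1 /forallP H2]|[H1 H2]]; split => //.
  move=> u v du dv uX uv.
  move: (H2 u) => /implyP/(_ du)/forallP/(_ v)/implyP/(_ dv)/implyP; apply.
  by rewrite uX uv.
apply/forallP => u; apply/implyP => du; apply/forallP => v; apply/implyP => dv.
by apply/implyP => /andP[uX uv]; exact: H2 uv.
Qed.

Lemma iso_lat_trans (T U V : finType) (A : {set {set T}}) (B : {set {set U}})
  (C : {set {set V}}) : iso_lat A B -> iso_lat B C -> iso_lat A C.
Proof.
move=> [f [f1 f2 f3]] [g [g1 g2 g3]]; exists (fun X => g (f X)); split.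
- by move=> X XA; apply: g1; apply: f1.
- move=> Y YC; have [Z ZB <-] := g2 Y YC; have [X XA <-] := f2 Z ZB.
  by exists X.
- move=> X Y XA YA; exact: (iff_trans (g3 _ _ (f1 _ XA) (f1 _ YA)) (f3 _ _ XA YA)).
Qed.

Definition emb (Q : fposet) (T : finType) (le : rel T) (phi : car Q -> T)
  (A : {set T}) : Prop :=
  [/\ {in dom Q &, injective phi}, phi @: dom Q = A &
      {in dom Q &, forall u v, @ord Q u v = le (phi u) (phi v)}].

Lemma iso_emb (Q : fposet) (T : finType) (le : rel T) (phi : car Q -> T)
  (A : {set T}) : emb le phi A -> iso_lat (filters Q) (filters (@FPoset T A le)).
Proof.
move=> [inj eA eo]; exists (fun X : {set car Q} => phi @: X); split.
- move=> X /filtersP [Xd Xup]; apply/filtersP; split => /=.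
    by rewrite -eA; apply: imsetS.
  move=> u v uA vA /imsetP [u' u'X ->] le_uv.
  rewrite -eA in vA; case/imsetP: vA le_uv => v' v'd -> le_uv.
  have u'd : u' \in dom Q by exact: (subsetP Xd).
  apply: imset_f; apply: (Xup u') => //.
  by rewrite eo.
- move=> Y /filtersP [/= YA Yup].
  exists [set u in dom Q | phi u \in Y].
    apply/filtersP; split; first by apply/subsetP => u; rewrite inE => /andP[].
    move=> u v du dv; rewrite !inE du dv /= => uY uv.
    apply: (Yup (phi u)) => //; first by rewrite -eA imset_f.
      by rewrite -eA imset_f.
    by rewrite -eo.
  apply/setP => t; apply/imsetP/idP => [[u]|tY].
    by rewrite inE => /andP[_ uY] ->.
  have := subsetP YA t tY; rewrite -eA => /imsetP [u ud tu].
  by exists u => //; rewrite inE ud -tu.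
- move=> X Y /filtersP [Xd _] /filtersP [Yd _]; split; last exact: imsetS.
  move=> H; apply/subsetP => u uY.
  have /imsetP [u' u'X eu] := subsetP H _ (imset_f phi uY).
  rewrite (inj u u') //; [exact: (subsetP Yd) | exact: (subsetP Xd)].
Qed.

Lemma exists_max (U : finType) (r : rel U) (E : {set U}) :
  reflexive r -> transitive r -> {in E &, antisymmetric r} ->
  forall z, z \in E ->
  exists2 s, s \in E & r z s /\ (forall t, t \in E -> r s t -> t = s).
Proof.
move=> rr rt ra.
suff H : forall n z, #|[set t in E | r z t]| < n -> z \in E ->
  exists2 s, s \in E & r z s /\ (forall t, t \in E -> r s t -> t = s).
  by move=> z zE; exact: (H _ z (ltnSn _) zE).
elim=> [|n IH] z //.
move=> Hn zE.
case: (boolP [exists t in E, r z t && (t != z)]) => [/existsP [t /andP [tE /andP [zt tz]]]|H].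
  have pr : [set t' in E | r t t'] \proper [set t' in E | r z t'].
    apply/properP; split.
      apply/subsetP => v; rewrite !inE => /andP [vE tv]; rewrite vE /=.
      exact: rt tv.
    exists z; first by rewrite inE zE rr.
    rewrite inE zE /=; apply/negP => tz'.
    by move/eqP: tz; apply; apply: ra => //; rewrite tz' zt.
  have := IH t (leq_trans (proper_card pr) Hn) tE.
  move=> [s sE [ts smax]]; exists s => //; split => //; exact: rt ts.
exists z => //; split => // t tE zt; apply/eqP; apply: contraNT H => tz.
by apply/existsP; exists t; rewrite tE zt tz.
Qed.

Lemma step (Q : fposet) (T : finType) (le : rel T)
  (le_refl : reflexive le) (le_anti : antisymmetric le)
  (le_trans : transitive le) (phi : car Q -> T) (A : {set T}) (y : T) :
  emb le phi A -> y \notin A ->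
  exists a b : {set car Q},
    [/\ @is_cutting Q a b,
        iso_lat (@interval Q a b)
          (filters (@FPoset T [set t in A | incomparable le y t] le)) &
        @emb (@expand Q a b) T le
          (fun o : option (car Q) => if o is Some u then phi u else y) (y |: A)].
Proof.
move=> [inj eA eo] yA.
pose D := [set u in dom Q | le (phi u) y].
pose U := [set u in dom Q | le y (phi u)].
have inD u : (u \in D) = (u \in dom Q) && le (phi u) y by rewrite inE.
have inU u : (u \in U) = (u \in dom Q) && le y (phi u) by rewrite inE.
have DU d u : d \in D -> u \in U -> @ord Q d u.
  rewrite inD inU => /andP [dd dy] /andP [ud yu]; rewrite eo //.
  exact: le_trans dy yu.
have UnD u : u \in U -> u \in D -> False.
  rewrite inD inU => /andP [ud yu] /andP [_ uy].
  have e : phi u = y by apply: le_anti; rewrite uy yu.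
  by move: yA; rewrite -eA -e imset_f.
have aF : (dom Q :\: D) \in filters Q.
  apply/filtersP; split; first exact: subsetDl.
  move=> u v du dv; rewrite !in_setD du dv /= !inD du dv /= !andbT => uy uv.
  apply: contra uy => vy.
  by rewrite eo // in uv; exact: le_trans uv vy.
have bF : U \in filters Q.
  apply/filtersP; split; first by apply/subsetP => u; rewrite inU => /andP[].
  move=> u v du dv; rewrite !inU du dv /= => yu uv.
  by rewrite eo // in uv; exact: le_trans yu uv.
have ba : U \subset dom Q :\: D.
  apply/subsetP => u uU; rewrite in_setD.
  have := uU; rewrite inU => /andP [-> _]; rewrite andbT.
  by apply/negP => uD; exact: UnD uU uD.
exists (dom Q :\: D), U; split.
- split => // C [[CF Cch] Cmax].
  pose W := (dom Q :\: D) :&: \bigcap_(Z in C | U \subset Z) Z.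
  have WF : W \in filters Q.
    apply/filtersP; split.
      exact: subset_trans (subsetIl _ _) (subsetDl _ _).
    move=> u v du dv; rewrite inE => /andP [ua /bigcapP uZ] uv.
    rewrite inE; apply/andP; split.
      by move/filtersP: aF => [_ H]; exact: H uv.
    apply/bigcapP => Z /andP [ZC UZ].
    move/filtersP: (subsetP CF Z ZC) => [_ H]; apply: H uv => //.
    by apply: uZ; rewrite ZC UZ.
  have Wint : W \in interval (dom Q :\: D) U.
    rewrite inE WF /=; apply/andP; split; last exact: subsetIl.
    apply/subsetP => u uU; rewrite inE (subsetP ba u uU) /=.
    by apply/bigcapP => Z /andP [_ UZ]; exact: (subsetP UZ).
  have Wcomp Z : Z \in C -> Z \subset W \/ W \subset Z.
    move=> ZC; case: (boolP (U \subset Z)) => UZ.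
      right; apply: subset_trans (subsetIr _ _) _.
      by apply/subsetP => u /bigcapP; apply; rewrite ZC UZ.
    left; apply/subsetP => u uZ.
    move/filtersP: (subsetP CF Z ZC) => [Zd Zup].
    have ud : u \in dom Q by exact: (subsetP Zd).
    rewrite inE; apply/andP; split.
      rewrite in_setD ud andbT; apply/negP => uD.
      move/negP: UZ; apply; apply/subsetP => v vU.
      apply: (Zup u) => //; last exact: DU.
      by move: vU; rewrite inU => /andP[].
    apply/bigcapP => Z' /andP [Z'C UZ'].
    case: (Cch Z Z' ZC Z'C) => [H|H]; first exact: (subsetP H).
    by move/negP: UZ; case; exact: subset_trans UZ' H.
  have ch : is_chain (W |: C).
    split.
      by apply/subsetP => X; rewrite in_setU1 => /predU1P [->|XC] //;
         exact: (subsetP CF).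
    move=> X Y; rewrite !in_setU1 => /predU1P [->|XC] /predU1P [->|YC].
    + by left.
    + by case: (Wcomp Y YC); [right|left].
    + exact: Wcomp.
    + exact: Cch.
  have e := Cmax _ ch (subsetUr _ _).
  by exists W => //; rewrite -e setU11.
- pose Q' := @FPoset (car Q) ((dom Q :\: D) :\: U) (@ord Q).
  have inab u : (u \in (dom Q :\: D) :\: U) =
      [&& u \in dom Q, ~~ le (phi u) y & ~~ le y (phi u)].
    rewrite !in_setD inD inU; case: (u \in dom Q) => /=; last by rewrite ?andbF.
    by rewrite andbT andbC.
  apply: (@iso_lat_trans _ (car Q) _ _ (filters Q')).
    exists (fun X : {set car Q} => X :\: U); split.
    + move=> X; rewrite [X \in interval _ _]inE => /andP [/filtersP [Xd Xup] /andP [UX Xa]].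
      apply/(@filtersP Q'); split; first exact: setSD.
      move=> u v /= _ vab; rewrite !in_setD => /andP [uU uX] uv.
      move: vab; rewrite in_setD => /andP [-> va] /=.
      apply: (Xup u) => //; [exact: (subsetP Xd) | ].
      by move: va; rewrite in_setD => /andP [].
    + move=> Y /(@filtersP Q') [/= Yab Yup]; exists (Y :|: U).
        rewrite [_ \in interval _ _]inE subsetUr /=; apply/andP; split; last first.
          apply/subUsetP; split => //; exact: subset_trans Yab (subsetDl _ _).
        apply/filtersP; split.
          apply/subUsetP; split.
            apply: subset_trans Yab _; exact: subset_trans (subsetDl _ _) (subsetDl _ _).
          exact: subset_trans ba (subsetDl _ _).
        move=> u v du dv; rewrite !in_setU => /orP [uY|uU] uv; last first.
          by move/filtersP: bF => [_ H]; rewrite (H u v) ?orbT.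
        case: (boolP (v \in U)) => vU; first by rewrite orbT.
        apply/orP; left; apply: (Yup u) => //; first exact: (subsetP Yab).
        rewrite in_setD vU /= in_setD dv andbT; apply/negP => vD.
        have := subsetP Yab u uY; rewrite inab => /and3P [_ uy _].
        move: vD; rewrite inD => /andP [_ vy]; rewrite eo // in uv.
        by move/negP: uy; apply; exact: le_trans uv vy.
      apply/setP => t; rewrite in_setD in_setU.
      case: (boolP (t \in U)) => tU /=; last by rewrite orbF.
      apply/esym/negbTE/negP => tY; have := subsetP Yab t tY.
      by rewrite in_setD tU.
    + move=> X Y; rewrite [X \in interval _ _]inE [Y \in interval _ _]inE => /andP [_ /andP [UX _]] /andP [_ /andP [UY _]].
      split => [H|H]; last exact: setSD.
      apply/subsetP => t tY; case: (boolP (t \in U)) => tU.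
        exact: (subsetP UX).
      have : t \in Y :\: U by rewrite in_setD tU.
      by move/(subsetP H); rewrite in_setD => /andP [].
  apply: (@iso_emb Q' T le phi); split.
  + move=> u v /=; rewrite !inab => /and3P [ud _ _] /and3P [vd _ _]; exact: inj.
  + apply/setP => t; rewrite inE; apply/imsetP/andP => [[u]|[tA inc]].
      rewrite inab => /and3P [ud uy yu] ->; split; first by rewrite -eA imset_f.
      by rewrite /incomparable uy yu.
    move: tA inc; rewrite -eA => /imsetP [u ud ->] /andP [uy yu].
    by exists u => //; rewrite inab ud uy yu.
  + by move=> u v /=; rewrite !inab => /and3P [ud _ _] /and3P [vd _ _]; exact: eo.
- have inS z : (Some z \in None |: [set Some x | x in dom Q]) = (z \in dom Q).
    by rewrite in_setU1 /= mem_imset //; move=> p q [].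
  split.
  + move=> [z|] [w|]; rewrite ?inS //.
    * by move=> zd wd e; congr Some; exact: inj.
    * move=> zd _ e; move: yA; rewrite -eA -e imset_f //.
    * move=> _ wd e; move: yA; rewrite -eA e imset_f //.
  + rewrite imsetU1 -imset_comp /=; congr (_ |: _); rewrite -eA.
    exact: eq_imset.
  + move=> [z|] [w|]; rewrite ?inS //= => zd wd.
    * exact: eo.
    * have eS0 : dom Q :\: (dom Q :\: D) = D.
        apply/setP => s; rewrite !in_setD inD.
        by case: (s \in dom Q); rewrite /= ?andbT ?negbK.
      rewrite /S0 eS0; apply/existsP/idP => [[s /andP [sS zs]]|zy].
        move: sS; rewrite inE => /andP [sD _]; move: (sD); rewrite inD => /andP [sd sy].
        by rewrite eo // in zs; exact: le_trans zs sy.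
      have zD : z \in D by rewrite inD zd.
      have [|||s sD [zs smax]] := @exists_max _ (fun u v => le (phi u) (phi v)) D _ _ _ z zD.
      + by move=> u /=.
      + by move=> u v w' /= ; exact: le_trans.
      + move=> u v; rewrite !inD => /andP [ud _] /andP [vd _] H; apply: inj => //.
        exact: le_anti.
      have sd : s \in dom Q by move: (sD); rewrite inD => /andP [].
      exists s; rewrite inE sD /=; apply/andP; split; last by rewrite eo.
      apply/forallP => t; apply/implyP => tD; apply/implyP => st; apply/eqP.
      apply: smax => //; move: (sD) (tD); rewrite !inD => /andP [_ _] /andP [td _].
      by rewrite -eo.
    * rewrite /S1; apply/existsP/idP => [[s /andP [sS sw]]|yw].
        move: sS; rewrite inE => /andP [sU _]; move: (sU); rewrite inU => /andP [sd ys].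
        by rewrite eo // in sw; exact: le_trans ys sw.
      have wU : w \in U by rewrite inU wd.
      have [|||s sU [ws smax]] := @exists_max _ (fun u v => le (phi v) (phi u)) U _ _ _ w wU.
      + by move=> u /=.
      + by move=> u v w' /= H1 H2; exact: le_trans H2 H1.
      + move=> u v; rewrite !inU => /andP [ud _] /andP [vd _] H; apply: inj => //.
        by apply: le_anti; rewrite andbC.
      have sd : s \in dom Q by move: (sU); rewrite inU => /andP [].
      exists s; rewrite inE sU /=; apply/andP; split; last by rewrite eo.
      apply/forallP => t; apply/implyP => tU; apply/implyP => ts; apply/eqP.
      apply: smax => //; move: (sU) (tU); rewrite !inU => /andP [_ _] /andP [td _].
      by rewrite -eo.
    * by rewrite le_refl.
Qed.

Lemma main_ind (T : finType) (le : rel T)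
  (le_refl : reflexive le) (le_anti : antisymmetric le)
  (le_trans : transitive le)
  (m : nat) (x : 'I_m -> T) (x_inj : injective x) k :
  forall n (Q : fposet) (phi : car Q -> T), n + k = m ->
  emb le phi [set t : T | [forall j : 'I_m, (x j == t) ==> (j < n)]] ->
  expansion_chain Q
    [seq FPoset [set t : T | [forall j : 'I_m, (x j == t) ==> (j <= i)]
                              && incomparable le (x i) t] le
       | i : 'I_m <- drop n (enum 'I_m)]
    (FPoset [set: T] le).
Proof.
elim: k => [|k IH] n Q phi.
  rewrite addn0 => enm He.
  rewrite drop_oversize ?size_enum_ord ?enm //=.
  have eA : [set t : T | [forall j : 'I_m, (x j == t) ==> (j < n)]] = setT.
    by apply/setP => t; rewrite !inE; apply/forallP => j; rewrite enm ltn_ord implybT.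
  rewrite eA in He; exact: (iso_emb He).
move=> enk He.
have ltnm : n < m by rewrite -enk addnS ltnS leq_addr.
pose i := Ordinal ltnm.
rewrite (drop_nth i) ?size_enum_ord //.
have -> : nth i (enum 'I_m) n = i by exact: (nth_ord_enum i i).
have yA : x i \notin [set t : T | [forall j : 'I_m, (x j == t) ==> (j < n)]].
  rewrite inE negb_forall; apply/existsP; exists i; by rewrite eqxx ltnn.
have [a [b [cut iso emb']]] := step le_refl le_anti le_trans He yA.
exists a, b; split => //.
  suff -> : [set t : T | [forall j : 'I_m, (x j == t) ==> (j <= i)]
                              && incomparable le (x i) t] =
    [set t in [set t : T | [forall j : 'I_m, (x j == t) ==> (j < n)]]
       | incomparable le (x i) t] by [].
  apply/setP => t; rewrite !inE.
  case inc: (incomparable le (x i) t); rewrite ?andbF ?andbT //.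
  apply: eq_forallb => j; case: (boolP (x j == t)) => //= ej.
  have jn : (j : nat) != n.
    apply/eqP => jn; have ji : j = i by apply: val_inj.
    by move: inc; rewrite -(eqP ej) ji /incomparable le_refl.
  by rewrite leq_eqVlt (negbTE jn).
apply: (IH n.+1 (@expand Q a b) (fun o : option (car Q) => if o is Some u then phi u else x i)); first by rewrite -enk addnS.
suff <- : x i |: [set t : T | [forall j : 'I_m, (x j == t) ==> (j < n)]] =
  [set t : T | [forall j : 'I_m, (x j == t) ==> (j < n.+1)]] by [].
apply/setP => t; rewrite !inE.
case: (boolP (t == x i)) => [/eqP ->|tx] /=.
  apply/esym/forallP => j; apply/implyP => /eqP /x_inj ->; exact: ltnSn.
apply/forallP/forallP => H j; apply/implyP => ej; move: (implyP (H j) ej).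
  by move=> /leqW.
rewrite ltnS leq_eqVlt => /orP [jn|//].
have ji : j = i by apply: val_inj; exact/eqP.
by move: tx; rewrite -(eqP ej) ji eqxx.
Qed.

Theorem corollary1 (T : finType) (le : rel T)
  (le_refl : reflexive le) (le_anti : antisymmetric le)
  (le_trans : transitive le)
  (m : nat) (x : 'I_m -> T) (x_inj : injective x) :
  expansion_chain
    (FPoset [set t : T | t \notin codom x] le)
    [seq FPoset [set t : T | [forall j : 'I_m, (x j == t) ==> (j <= i)]
                              && incomparable le (x i) t] le
       | i : 'I_m <- enum 'I_m]
    (FPoset [set: T] le).
Proof.
have := @main_ind T le le_refl le_anti le_trans m x x_inj m 0
  (FPoset [set t : T | t \notin codom x] le) (fun t => t) (erefl _).
rewrite drop0; apply; split => //=.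
rewrite imset_id; apply/setP => t; rewrite !inE.
apply/idP/forallP => [H j|H]; first by apply/implyP => /eqP e; move: H; rewrite -e codom_f.
apply/negP => /codomP [j ej]; by move: (H j); rewrite ej eqxx.
Qed.
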